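(* Let $R$ be as in the standing setup, and let $x\in R$ with $v(x)=e$ (so $xR$ is a minimal reduction of $m$). The following are equivalent: (1) The $m$-adic filtration is essentially divisible with respect to $xR$. (2) $v(m^i\cap xR)=v(m^i)\cap v(xR)$ for all $i\ge 0$. (3) $v(m^i+xR)=v(m^i)\cup v(xR)$ for all $i\ge 0$. (4) $b_j=c_j$ for $j=0,\ldots,e-1$.
   Context: Standing setup: $k$ is a field and $R$ is a complete local domain with $k\subseteq R\subseteq k[[t]]$, residue field $k$, maximal ideal $m$, and nonzero conductor $(R:k[[t]])\neq 0$. Let $v$ be the $t$-adic valuation, $S=v(R)=\{v(r): r\in R, r\neq 0\}$, and $e$ the smallest positive element of $S$ (the multiplicity). For a nonzero ideal $I$, $v(I)=\{v(a): a\in I, a\ne0\}$; $m^0=R$. The Apery set of $S$ with respect to $e$ is $\{w_0,\ldots,w_{e-1}\}$ where $w_j$ is the smallest element of $S$ congruent to $j \pmod e$. For $a\in R$, $\operatorname{ord}(a)=\max\{i: a\in m^i\}$; for $s\in S$, $\operatorname{vord}(s)=\max\{i: s\in v(m^i)\}$. Given $x\in R$ with $v(x)=e$, the $m$-adic filtration is essentially divisible with respect to $xR$ if for every $u\in v(xR)$ there is $a\in xR$ with $v(a)=u$ and $\operatorname{ord}(a)=\operatorname{vord}(u)$. Define $b_j=\max\{i: w_j\in v(m^i)\}$ and $c_j=\max\{i: w_j\in v(m^i+xR)\}$ for $j=0,\dots,e-1$. *)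

(* Defs.v *)
(* Formal power series k[[t]] are modelled as functions nat -> k
   (coefficient sequences) with the Cauchy product. *)
From HB Require Import structures.
From Stdlib Require List.
From mathcomp Require Import all_boot all_order all_algebra.
Set Implicit Arguments. Unset Strict Implicit. Unset Printing Implicit Defensive.
Import GRing.Theory.
Local Open Scope ring_scope.

Section PowerSeries.
Variable k : fieldType.

Definition series := nat -> k.

Definition ps_const (c : k) : series := fun n => if n is 0%N then c else 0.
Definition ps0 : series := ps_const 0.
Definition ps1 : series := ps_const 1.
Definition ps_add (f g : series) : series := fun n => f n + g n.
Definition ps_opp (f : series) : series := fun n => - f n.
Definition ps_mul (f g : series) : series :=
  fun n => \sum_(i < n.+1) f i * g (n - i)%N.

(* t-adic valuation as a relation: v(f) = n (f <> 0 is implied). *)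
Definition vval (f : series) (n : nat) : Prop :=
  f n != 0 /\ forall i, (i < n)%N -> f i = 0.

Definition vset (I : series -> Prop) (n : nat) : Prop :=
  exists a, I a /\ vval a n.

Definition subring_with_k (R : series -> Prop) : Prop :=
  [/\ forall c, R (ps_const c),
      forall f g, R f -> R g -> R (ps_add f g),
      forall f, R f -> R (ps_opp f) &
      forall f g, R f -> R g -> R (ps_mul f g)].

Definition conductor_nonzero (R : series -> Prop) : Prop :=
  exists a : series, a <> ps0 /\ forall f : series, R (ps_mul a f).

Definition nonunits (R : series -> Prop) (r : series) : Prop :=
  R r /\ ~ (exists s, R s /\ ps_mul r s = ps1).

(* R local with maximal ideal m = nonunits and residue field k. *)
Definition local_residue_k (R : series -> Prop) : Prop :=
  (forall f g, nonunits R f -> nonunits R g -> nonunits R (ps_add f g)) /\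
  (forall f r, nonunits R f -> R r -> nonunits R (ps_mul f r)) /\
  (forall r, R r -> exists c, nonunits R (ps_add r (ps_opp (ps_const c)))).

Definition sum_prods (s : seq (series * series)) : series :=
  foldr (fun p acc => ps_add (ps_mul p.1 p.2) acc) ps0 s.

Definition ideal_mul (I J : series -> Prop) (f : series) : Prop :=
  exists s : seq (series * series),
    (forall p, List.In p s -> I p.1 /\ J p.2) /\ f = sum_prods s.

Fixpoint ideal_pow (R m : series -> Prop) (i : nat) : series -> Prop :=
  match i with
  | 0%N => R
  | i'.+1 => ideal_mul m (ideal_pow R m i')
  end.

Definition principal (R : series -> Prop) (x : series) (f : series) : Prop :=
  exists r, R r /\ f = ps_mul x r.

Definition ideal_add (I J : series -> Prop) (f : series) : Prop :=
  exists a b, I a /\ J b /\ f = ps_add a b.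

Definition ideal_cap (I J : series -> Prop) (f : series) : Prop := I f /\ J f.

End PowerSeries.

Definition is_max (P : nat -> Prop) (n : nat) : Prop :=
  P n /\ forall i, P i -> (i <= n)%N.

Definition is_multiplicity (S : nat -> Prop) (e : nat) : Prop :=
  (0 < e)%N /\ S e /\ forall s, S s -> (0 < s)%N -> (e <= s)%N.

Definition is_apery (S : nat -> Prop) (e j w : nat) : Prop :=
  S w /\ w = j %[mod e] /\ forall s, S s -> s = j %[mod e] -> (w <= s)%N.

(* The m-adic filtration is essentially divisible w.r.t. xR:
   every u in v(xR) is v(a) for some a in xR with ord(a) = vord(u). *)
Definition ess_divisible (k : fieldType) (R m : series k -> Prop) (x : series k) :=
  forall u, vset (principal R x) u ->
    exists a, principal R x a /\ vval a u /\
      exists n, is_max (fun i => ideal_pow R m i a) n /\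
                is_max (fun i => vset (ideal_pow R m i) u) n.

(* Main.v *)
Require Import Defs.
From HB Require Import structures.
From Stdlib Require Import Lia Classical FunctionalExtensionality.
From Stdlib Require List.
From mathcomp Require Import all_boot all_order all_algebra.
Set Implicit Arguments. Unset Strict Implicit. Unset Printing Implicit Defensive.
Import GRing.Theory.
Local Open Scope ring_scope.

Ltac nlia :=
  repeat match goal with
  | H : context [@nat_of_ord ?n ?x] |- _ =>
     let y := fresh "y" in remember (@nat_of_ord n x) as y eqn:Ey in *; clear Ey
  | |- context [@nat_of_ord ?n ?x] =>
     let y := fresh "y" in remember (@nat_of_ord n x) as y eqn:Ey in *; clear Ey
  end;
  repeat match goal with H : is_true (leq _ _) |- _ => move/leP: H => H end;
  try (apply/leP);
  repeat match goal with H : context [addn] |- _ => rewrite -plusE in H end;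
  repeat match goal with H : context [subn] |- _ => rewrite -minusE in H end;
  repeat match goal with H : context [muln] |- _ => rewrite -multE in H end;
  rewrite -?plusE -?minusE -?multE; lia.

Section PS.
Variable k : fieldType.
Implicit Types f g a b d : series k.

Lemma ps0E n : ps0 k n = 0. Proof. by case: n. Qed.

Lemma mulCr f c n : ps_mul f (ps_const c) n = f n * c.
Proof.
rewrite /ps_mul big_ord_recr /= subnn big1 ?add0r // => i _.
have : (0 < n - i)%N by rewrite subn_gt0.
by case: (n - i)%N => // m _; rewrite mulr0.
Qed.

Lemma mul0c f g : ps_mul f g 0 = f 0%N * g 0%N.
Proof. by rewrite /ps_mul big_ord1. Qed.

Lemma ps_mul_rev f g N : ps_mul f g N = \sum_(i < N.+1) f (N - i)%N * g i.
Proof.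
rewrite /ps_mul (reindex_inj rev_ord_inj) /=; apply: eq_bigr => i _.
by rewrite subSS subKn // -ltnS.
Qed.

Lemma mul_vanish a b p q :
  (forall i, (i < p)%N -> a i = 0) -> (forall i, (i < q)%N -> b i = 0) ->
  forall j, (j < p + q)%N -> ps_mul a b j = 0.
Proof.
move=> ha hb j hj; rewrite /ps_mul big1 // => i _.
case: (ltnP i p) => hip; first by rewrite ha // mul0r.
rewrite hb ?mulr0 //. have hio := ltn_ord i. nlia.
Qed.

Lemma mul_lead a b p q :
  (forall i, (i < p)%N -> a i = 0) -> (forall i, (i < q)%N -> b i = 0) ->
  ps_mul a b (p + q)%N = a p * b q.
Proof.
move=> ha hb; have hpq : (p < (p + q).+1)%N by nlia.
rewrite /ps_mul (bigD1 (Ordinal hpq)) //=.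
rewrite addKn big1 ?addr0 // => i hi.
have hne : (nat_of_ord i != p) by apply: contra hi => /eqP h; apply/eqP/val_inj.
case: (ltnP i p) => hip; first by rewrite ha // mul0r.
rewrite hb ?mulr0 //. have hio := ltn_ord i. move: hne => /eqP hne. nlia.
Qed.

Lemma vval_uniq f p q : vval f p -> vval f q -> p = q.
Proof.
move=> [hp lp] [hq lq]; case: (ltngtP p q) => // h.
- by move: hp; rewrite lq // eqxx.
- by move: hq; rewrite lp // eqxx.
Qed.

Lemma vval_exists f p : f p != 0 -> exists q, vval f q.
Proof.
move=> hp; have ex : exists q, f q != 0 by exists p.
case: (ex_minnP ex) => q hq hmin; exists q; split => // i hi.
apply/eqP; apply: contraTT hi => h; rewrite -leqNgt; exact: hmin.
Qed.

Lemma vval_mul a b p q : vval a p -> vval b q -> vval (ps_mul a b) (p + q).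
Proof.
move=> [ap la] [bq lb]; split; first by rewrite mul_lead // mulf_neq0.
exact: mul_vanish.
Qed.

Lemma sum_prods_cat (s1 s2 : seq (series k * series k)) :
  sum_prods (s1 ++ s2) = ps_add (sum_prods s1) (sum_prods s2).
Proof.
elim: s1 => [|p s IH] /=; apply: functional_extensionality => n.
  by rewrite /ps_add ps0E add0r.
by rewrite IH /ps_add addrA.
Qed.

Lemma mul_assoc_c a f c :
  ps_mul (ps_mul a f) (ps_const c) = ps_mul a (ps_mul f (ps_const c)).
Proof.
apply: functional_extensionality => n.
rewrite mulCr /ps_mul mulr_suml; apply: eq_bigr => i _.
by rewrite -[X in _ = _ * X]/(ps_mul f (ps_const c) (n - i)%N) mulCr mulrA.
Qed.

Lemma sum_prods_scale (s : seq (series k * series k)) c :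
  ps_mul (sum_prods s) (ps_const c) =
  sum_prods (map (fun p => (p.1, ps_mul p.2 (ps_const c))) s).
Proof.
apply: functional_extensionality => n.
elim: s => [|p s IH] /=; first by rewrite mulCr ps0E mul0r.
rewrite mulCr /ps_add -IH mulCr mulrDl; congr (_ + _).
by rewrite -mul_assoc_c mulCr.
Qed.

Lemma mul_addr a f g : ps_mul a (ps_add f g) = ps_add (ps_mul a f) (ps_mul a g).
Proof.
apply: functional_extensionality => n.
by rewrite /ps_mul /ps_add -big_split; apply: eq_bigr => i _; rewrite mulrDr.
Qed.



Lemma mulr0ps a : ps_mul a (ps0 k) = ps0 k.
Proof.
apply: functional_extensionality => n.
by rewrite ps0E /ps_mul big1 // => i _; rewrite ps0E mulr0.
Qed.


Section Div.
Variables (d g : series k) (n : nat).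
Hypothesis hdn : d n != 0.
Hypothesis hdl : forall i, (i < n)%N -> d i = 0.
Hypothesis hgl : forall i, (i < n)%N -> g i = 0.

Fixpoint dcoefs (m : nat) : seq k :=
  match m with
  | 0%N => [::]
  | m'.+1 => let s := dcoefs m' in
     rcons s ((g (n + m')%N - \sum_(i < m') d (n + m' - i)%N * nth 0 s i) / d n)
  end.

Definition dh (j : nat) : k := nth 0 (dcoefs j.+1) j.

Lemma size_dcoefs m : size (dcoefs m) = m.
Proof. by elim: m => //= m IH; rewrite size_rcons IH. Qed.

Lemma nth_dcoefs m i : (i < m)%N -> nth 0 (dcoefs m) i = dh i.
Proof.
elim: m => // m IH; rewrite ltnS leq_eqVlt => /orP [/eqP -> // | him].
by rewrite /= nth_rcons size_dcoefs him IH.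
Qed.

Lemma dh_eq m : dh m * d n = g (n + m)%N - \sum_(i < m) d (n + m - i)%N * dh i.
Proof.
rewrite /dh /= nth_rcons size_dcoefs ltnn eqxx divfK //; congr (_ - _).
by apply: eq_bigr => i _; rewrite nth_dcoefs.
Qed.

Lemma div_ok : ps_mul d dh = g.
Proof.
apply: functional_extensionality => N.
case: (ltnP N n) => hN.
  rewrite hgl // /ps_mul big1 // => i _; rewrite hdl ?mul0r //.
  have hio := ltn_ord i; nlia.
have [m ->] : exists m, N = (n + m)%N by exists (N - n)%N; nlia.
rewrite ps_mul_rev -(big_mkord xpredT (fun i => d (n + m - i)%N * dh i)).
rewrite (big_cat_nat (n := m.+1)) //=; last by nlia.
rewrite [X in _ + X]big1_seq ?addr0; last first.
  move=> i; rewrite mem_index_iota => hi.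
  case/and3P: hi => _ h1 h2.
  rewrite hdl ?mul0r //; nlia.
rewrite big_nat_recr //= big_mkord addnK.
by rewrite mulrC dh_eq addrC subrK.
Qed.
End Div.

Lemma div_exists d g n : d n != 0 -> (forall i, (i < n)%N -> d i = 0) ->
  (forall i, (i < n)%N -> g i = 0) -> exists h, g = ps_mul d h.
Proof. move=> h1 h2 h3; exists (dh d g n); by rewrite div_ok. Qed.

Lemma mul_cancel_low d h n M : d n != 0 -> (forall i, (i < n)%N -> d i = 0) ->
  (forall j, (j < n + M)%N -> ps_mul d h j = 0) -> forall j, (j < M)%N -> h j = 0.
Proof.
move=> hdn hdl hl; elim/ltn_ind => j IH hjM.
have hj : (n + j < n + M)%N by nlia.
move: (hl _ hj); rewrite mul_lead //; last first.
  move=> i hi; apply: IH => //; nlia.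
by move/eqP; rewrite mulf_eq0 (negbTE hdn) /= => /eqP.
Qed.

End PS.

Lemma max_exists (P : nat -> Prop) i0 B : P i0 -> (forall i, P i -> (i <= B)%N) ->
  exists n, is_max P n.
Proof.
elim: B i0 => [|B IH] i0 h0 hB.
  exists 0%N; split; last by move=> i /hB.
  by have := hB _ h0; rewrite leqn0 => /eqP <-.
case: (classic (P B.+1)) => hPB; first by exists B.+1.
apply: (IH i0) => // i hi; have := hB _ hi; rewrite leq_eqVlt => /orP [/eqP hE|] //.
by rewrite hE in hi.
Qed.

Lemma min_exists (P : nat -> Prop) s0 : P s0 ->
  exists s, P s /\ forall t, P t -> (s <= t)%N.
Proof.
elim/ltn_ind: s0 => s0 IH h0.
case: (classic (exists t, P t /\ (t < s0)%N)) => [[t [ht hlt]] | hn].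
  exact: (IH t).
exists s0; split => // t ht; rewrite leqNgt; apply/negP => hlt; apply: hn; by exists t.
Qed.

Section Ring.
Variable k : fieldType.
Variable R : series k -> Prop.
Variable x : series k.
Variable e : nat.
Hypothesis hR : subring_with_k R.
Hypothesis hcond : conductor_nonzero R.
Hypothesis hloc : local_residue_k R.
Hypothesis hmult : is_multiplicity (vset R) e.
Hypothesis hx : R x.
Hypothesis hvx : vval x e.

Local Notation m := (nonunits R).
Local Notation I := (ideal_pow R m).
Local Notation J := (principal R x).

Lemma Rc c : R (ps_const c). Proof. by case: hR. Qed.
Lemma Radd f g : R f -> R g -> R (ps_add f g). Proof. by case: hR => _ H _ _; apply: H. Qed.
Lemma Ropp f : R f -> R (ps_opp f). Proof. by case: hR => _ _ H _; apply: H. Qed.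
Lemma Rmul f g : R f -> R g -> R (ps_mul f g). Proof. by case: hR => _ _ _ H; apply: H. Qed.
Lemma R0 : R (ps0 k). Proof. exact: Rc. Qed.

Lemma nonunit_of f : R f -> f 0%N = 0 -> m f.
Proof.
move=> Rf f0; split => // -[s [_ hs]].
have := congr1 (fun h => h 0%N) hs; rewrite /= mul0c f0 mul0r /ps1 /ps_const.
by move/eqP; rewrite eq_sym oner_eq0.
Qed.

Lemma NU0 f : m f -> f 0%N = 0.
Proof.
move=> mf; apply/eqP; apply/negPn/negP => hf.
set a := f 0%N.
set g := ps_opp (ps_add f (ps_opp (ps_const a))).
have Rf : R f by case: mf.
have Rg : R g by apply/Ropp/Radd/Ropp/Rc.
have mg : m g by apply: nonunit_of => //; rewrite /g /ps_opp /ps_add /= subrr oppr0.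
have [hadd _] := hloc.
have mfg := hadd _ _ mf mg.
have E : ps_add f g = ps_const a.
  apply: functional_extensionality => n; rewrite /g /ps_add /ps_opp opprD opprK addrA subrr add0r.
  done.
rewrite E in mfg.
case: mfg => _; apply; exists (ps_const a^-1); split; first exact: Rc.
apply: functional_extensionality => n; rewrite mulCr.
case: n => [|n] /=; [by rewrite mulfV | by rewrite mul0r].
Qed.

Lemma m_sub_R f : m f -> R f. Proof. by case. Qed.

Lemma sum_prods_R (s : seq (series k * series k)) :
  (forall p, List.In p s -> R p.1 /\ R p.2) -> R (sum_prods s).
Proof.
elim: s => [|p s IH] hs /=; first exact: R0.
have [h1 h2] := hs p (or_introl erefl).
apply: Radd; first exact: Rmul.
by apply: IH => q hq; apply: hs; right.
Qed.

Lemma ideal_mul_mono (A B B' : series k -> Prop) :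
  (forall f, B f -> B' f) -> forall f, ideal_mul A B f -> ideal_mul A B' f.
Proof.
move=> hB f [s [hs ->]]; exists s; split => // p hp.
by have [? ?] := hs p hp; split => //; apply: hB.
Qed.

Lemma I_dec i f : I i.+1 f -> I i f.
Proof.
elim: i f => [|i IH] f /=.
  move=> [s [hs ->]]; apply: sum_prods_R => p hp.
  by have [? ?] := hs p hp; split => //; apply: m_sub_R.
by apply: ideal_mul_mono.
Qed.

Lemma I_mono i j f : (i <= j)%N -> I j f -> I i f.
Proof.
move=> hij; elim: j hij f => [|j IH] hij f.
  by rewrite leqn0 in hij; move/eqP: hij => ->.
rewrite leq_eqVlt in hij; case/orP: hij => [/eqP -> // | hij] hf.
by apply: IH; [exact: hij | exact: I_dec].
Qed.

Lemma I_sub_R i f : I i f -> R f.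
Proof. by move=> h; apply: (I_mono (i := 0) (j := i)). Qed.

Lemma I_ps0 i : I i (ps0 k).
Proof. case: i => [|i] /=; first exact: R0. by exists [::]; split. Qed.

Lemma I_add i f g : I i f -> I i g -> I i (ps_add f g).
Proof.
case: i => [|i] /=; first exact: Radd.
move=> [s1 [h1 ->]] [s2 [h2 ->]]; exists (s1 ++ s2); split; last by rewrite sum_prods_cat.
by move=> p hp; case: (List.in_app_or _ _ _ hp) => hp'; [apply: h1 | apply: h2].
Qed.

Lemma I_scale i f c : I i f -> I i (ps_mul f (ps_const c)).
Proof.
elim: i f => [|i IH] f /=; first by move=> h; apply: Rmul => //; exact: Rc.
move=> [s [hs ->]]; rewrite sum_prods_scale.
eexists; split; last reflexivity.
move=> p /List.in_map_iff [q [<- hq]] /=.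
by have [? ?] := hs q hq; split => //; apply: IH.
Qed.

Lemma I_comb i f g c : I i f -> I i g -> I i (ps_add f (ps_mul g (ps_const c))).
Proof. by move=> hf hg; apply: I_add => //; apply: I_scale. Qed.

Lemma I_van i f : I i f -> forall j, (j < i)%N -> f j = 0.
Proof.
elim: i f => [|i IH] f //= [s [hs ->]].
elim: s hs => [|p s IHs] hs j hj /=; first by rewrite ps0E.
rewrite /ps_add (IHs (fun q hq => hs q (or_intror hq)) j hj).
have [h1 h2] := hs p (or_introl erefl).
rewrite addr0 (@mul_vanish _ _ _ 1 i) //.
by case => // _; apply: NU0.
by apply: IH.
Qed.

Lemma J_ps0 : J (ps0 k).
Proof. exists (ps0 k); split; [exact: R0 | by rewrite mulr0ps]. Qed.

Lemma J_add f g : J f -> J g -> J (ps_add f g).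
Proof.
move=> [r [hr ->]] [s [hs ->]]; exists (ps_add r s); split; first exact: Radd.
by rewrite mul_addr.
Qed.

Lemma J_scale f c : J f -> J (ps_mul f (ps_const c)).
Proof.
move=> [r [hr ->]]; exists (ps_mul r (ps_const c)); split; last exact: mul_assoc_c.
by apply: Rmul => //; exact: Rc.
Qed.

Lemma J_comb f g c : J f -> J g -> J (ps_add f (ps_mul g (ps_const c))).
Proof. by move=> hf hg; apply: J_add => //; apply: J_scale. Qed.

Lemma J_sub_R f : J f -> R f.
Proof. by move=> [r [hr ->]]; apply: Rmul. Qed.


Lemma x_nonunit : m x.
Proof.
apply: nonunit_of => //; case: hvx => _; apply.
by case: hmult.
Qed.

Lemma sum_single (f g : series k) : sum_prods [:: (f, g)] = ps_mul f g.
Proof. by apply: functional_extensionality => n; rewrite /= /ps_add ps0E addr0. Qed.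



Lemma T i : exists N, forall g, (forall j, (j < N)%N -> g j = 0) -> I i g.
Proof.
elim: i => [|i [N IH]].
  case: hcond => a [ha hRa].
  have [p hp] : exists p, a p != 0.
    apply: NNPP => hn; apply: ha; apply: functional_extensionality => n.
    rewrite ps0E; apply/eqP; apply: NNPP => hn'; apply: hn; exists n; exact/negP.
  have [c [hc hcl]] := vval_exists hp.
  exists c => g hg; have [h ->] := div_exists hc hcl hg; exact: hRa.
exists (e + N)%N => g hg.
have [he hel] := hvx.
have [h Eh] := div_exists he hel (fun j hj => hg j (leq_trans hj (leq_addr _ _))).
have hh : forall j, (j < N)%N -> h j = 0.
  apply: (mul_cancel_low he hel) => j hj; by rewrite -Eh hg.
rewrite Eh -sum_single /=; exists [:: (x, h)]; split => // p [<- | []] /=.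
split; [exact: x_nonunit | exact: IH].
Qed.

Lemma vsetJ_inv n : vset J n -> (e <= n)%N /\ vset R (n - e).
Proof.
move=> [f [[r [hr ->]] hv]].
have [p hp] : exists p, r p != 0.
  apply: NNPP => hn; case: hv => hv _; move: hv; rewrite /ps_mul big1 ?eqxx //.
  move=> i _; have : r (n - i)%N = 0 by apply/eqP; apply: NNPP => h; apply: hn; exists (n - i)%N; exact/negP.
  by move=> ->; rewrite mulr0.
have [q hq] := vval_exists hp.
have := vval_uniq hv (vval_mul hvx hq) => ->; split; first exact: leq_addr.
by rewrite addKn; exists r.
Qed.

Lemma vsetJ_of s : vset R s -> vset J (e + s).
Proof.
move=> [r [hr hv]]; exists (ps_mul x r); split; first by exists r.
exact: vval_mul.
Qed.

Lemma S_add p q : vset R p -> vset R q -> vset R (p + q).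
Proof.
move=> [a [ha hva]] [b [hb hvb]]; exists (ps_mul a b); split; first exact: Rmul.
exact: vval_mul.
Qed.

Lemma vsetI_bound i n : vset (I i) n -> (i <= n)%N.
Proof.
move=> [a [ha [hn _]]]; rewrite leqNgt; apply/negP => hlt.
by move: hn; rewrite (I_van ha hlt) eqxx.
Qed.

Lemma I_bound i a n : I i a -> vval a n -> (i <= n)%N.
Proof. by move=> ha hv; apply: (@vsetI_bound i n); exists a. Qed.


Lemma cancel_lead (a c : k) : c != 0 -> a + c * (- a / c) = 0.
Proof. by move=> hc; rewrite mulrCA mulfV // mulr1 subrr. Qed.

Definition P1 := ess_divisible R m x.
Definition P2 := forall i n, vset (ideal_cap (I i) J) n <-> vset (I i) n /\ vset J n.
Definition P3 := forall i n, vset (ideal_add (I i) J) n <-> vset (I i) n \/ vset J n.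
Definition P4 := forall j, (j < e)%N -> forall w, is_apery (vset R) e j w ->
         exists n, is_max (fun i => vset (I i) w) n /\
                   is_max (fun i => vset (ideal_add (I i) J) w) n.

Lemma cap_easy i n : vset (ideal_cap (I i) J) n -> vset (I i) n /\ vset J n.
Proof. by move=> [a [[h1 h2] hv]]; split; exists a. Qed.

Lemma add_easy i n : vset (I i) n \/ vset J n -> vset (ideal_add (I i) J) n.
Proof.
case=> [[a [ha hv]] | [b [hb hv]]].
  exists a; split => //; exists a, (ps0 k); do 2?split => //; first exact: J_ps0.
  by apply: functional_extensionality => j; rewrite /ps_add ps0E addr0.
exists b; split => //; exists (ps0 k), b; do 2?split => //; first exact: I_ps0.
by apply: functional_extensionality => j; rewrite /ps_add ps0E add0r.
Qed.

Lemma L12 : P1 -> P2.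
Proof.
move=> h1 i n; split; first exact: cap_easy.
move=> [hI hJ]; have [a [ha [hva [N [[hN1 hN2] [hM1 hM2]]]]]] := h1 n hJ.
exists a; split => //; split => //; exact: (I_mono (hM2 i hI) hN1).
Qed.

Lemma L21 : P2 -> P1.
Proof.
move=> h2 u hu.
have hR0 : vset (I 0) u by case: hu => f [hf hv]; exists f; split => //; exact: J_sub_R.
have [N [hN hNm]] := @max_exists (fun i => vset (I i) u) 0 u hR0 (@vsetI_bound^~ u).
have [a [[haI haJ] hva]] := (h2 N u).2 (conj hN hu).
exists a; split => //; split => //; exists N; split; split => //.
by move=> i hi; apply: hNm; exists a.
Qed.

Lemma desc23 (h2 : P2) i n d : forall a b, I i a -> J b -> vval (ps_add a b) n ->
  (forall j, (j < n - d)%N -> a j = 0) -> vset (I i) n \/ vset J n.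
Proof.
have Eb (a b : series k) j : b j = ps_add a b j - a j by rewrite /ps_add (addrC (a j)) addrK.
elim: d => [|d IH] a b ha hb [hv hvl] hal.
  case: (eqVneq (a n) 0) => han; last by left; exists a; do 2?split => //; move=> j; rewrite subn0 in hal; exact: hal.
  right; exists b; do 2?split => //.
    by rewrite (Eb a) han subr0.
  by move=> j hj; rewrite (Eb a) hvl // hal ?subr0 // subn0.
case: (ltnP d n) => hd; last first.
  by apply: (IH a b) => // j; have -> : (n - d = 0)%N by nlia.
set s := (n - d.+1)%N.
have hsn : (s < n)%N by rewrite /s; nlia.
case: (eqVneq (a s) 0) => has.
  apply: (IH a b) => // j hj; case: (ltnP j s) => hjs; first exact: hal.
  by have -> : j = s by rewrite /s in hjs *; nlia.
have hva : vval a s by split.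
have hvb : vval b s.
  split; first by rewrite (Eb a) hvl // sub0r oppr_eq0.
  by move=> j hj; rewrite (Eb a) hvl ?hal ?subr0 //; nlia.
have [c [[hcI hcJ] [hcs hcl]]] := (h2 i s).2 (conj (ex_intro _ a (conj ha hva)) (ex_intro _ b (conj hb hvb))).
set lam := - a s / c s.
apply: (IH (ps_add a (ps_mul c (ps_const lam))) (ps_add b (ps_mul c (ps_const (- lam))))).
- exact: I_comb.
- exact: J_comb.
- have -> : ps_add (ps_add a (ps_mul c (ps_const lam))) (ps_add b (ps_mul c (ps_const (- lam)))) = ps_add a b.
    apply: functional_extensionality => j; rewrite /ps_add !mulCr mulrN.
    by rewrite addrACA subrr addr0.
  by split.
- move=> j hj; rewrite /ps_add mulCr.
  case: (ltnP j s) => hjs; first by rewrite hal ?hcl ?mul0r ?addr0.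
  have -> : j = s by rewrite /s in hjs *; nlia.
  by rewrite /lam cancel_lead.
Qed.

Lemma L23 : P2 -> P3.
Proof.
move=> h2 i n; split; last exact: add_easy.
move=> [f [[a [b [ha [hb ->]]]] hv]].
by apply: (desc23 h2 (d := n) ha hb hv) => j; rewrite subnn.
Qed.


Lemma split32 (h3 : P3) i n N : (forall g, (forall j, (j < N)%N -> g j = 0) -> I i g) ->
  forall d f, ideal_add (I i) J f -> (forall j, (j <= n)%N -> f j = 0) ->
  (forall j, (j < N - d)%N -> f j = 0) ->
  exists a2 b2, [/\ I i a2, J b2, f = ps_add a2 b2,
                   (forall j, (j <= n)%N -> a2 j = 0) & (forall j, (j <= n)%N -> b2 j = 0)].
Proof.
move=> hT; elim=> [|d IH] f hf hfn hfl.
  exists f, (ps0 k); split.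
  - by apply: hT => j hj; apply: hfl; rewrite subn0.
  - exact: J_ps0.
  - by apply: functional_extensionality => j; rewrite /ps_add ps0E addr0.
  - exact: hfn.
  - by move=> j _; rewrite ps0E.
case: (ltnP d N) => hd; last first.
  by apply: IH => // j; have -> : (N - d = 0)%N by nlia.
set s := (N - d.+1)%N.
case: (eqVneq (f s) 0) => hfs.
  apply: IH => // j hj; case: (ltnP j s) => hjs; first exact: hfl.
  by have -> : j = s by rewrite /s in hjs *; nlia.
have hvf : vval f s by split.
have hns : (n < s)%N by rewrite ltnNge; apply/negP => h; move: hfs; rewrite hfn ?eqxx.
case: hf => [a [b [ha [hb Ef]]]].
case: ((h3 i s).1 (ex_intro _ f (conj (ex_intro _ a (ex_intro _ b (conj ha (conj hb Ef)))) hvf)))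
  => [[a1 [ha1 [ha1s ha1l]]] | [b1 [hb1 [hb1s hb1l]]]].
- set lam := - f s / a1 s.
  have hf' : ideal_add (I i) J (ps_add f (ps_mul a1 (ps_const lam))).
    exists (ps_add a (ps_mul a1 (ps_const lam))), b; split; first exact: I_comb.
    split => //; rewrite Ef; apply: functional_extensionality => j.
    by rewrite /ps_add addrAC.
  have hn' : forall j, (j <= n)%N -> ps_add f (ps_mul a1 (ps_const lam)) j = 0.
    move=> j hj; rewrite /ps_add mulCr hfn // ha1l ?mul0r ?addr0 //; nlia.
  have hl' : forall j, (j < N - d)%N -> ps_add f (ps_mul a1 (ps_const lam)) j = 0.
    move=> j hj; rewrite /ps_add mulCr.
    case: (ltnP j s) => hjs; first by rewrite hfl ?ha1l ?mul0r ?addr0.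
    have -> : j = s by rewrite /s in hjs *; nlia.
    by rewrite /lam cancel_lead.
  have [a2 [b2 [h1 h2 h3' h4 h5]]] := IH _ hf' hn' hl'.
  exists (ps_add a2 (ps_mul a1 (ps_const (- lam)))), b2; split => //.
  + exact: I_comb.
  + apply: functional_extensionality => j.
    have := congr1 (fun h => h j) h3'; rewrite /ps_add !mulCr mulrN => E.
    by rewrite addrAC -E addrK.
  + move=> j hj; rewrite /ps_add mulCr h4 // ha1l ?mul0r ?addr0 //; nlia.
- set lam := - f s / b1 s.
  have hf' : ideal_add (I i) J (ps_add f (ps_mul b1 (ps_const lam))).
    exists a, (ps_add b (ps_mul b1 (ps_const lam))); split => //.
    split; first exact: J_comb.
    rewrite Ef; apply: functional_extensionality => j.
    by rewrite /ps_add addrA.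
  have hn' : forall j, (j <= n)%N -> ps_add f (ps_mul b1 (ps_const lam)) j = 0.
    move=> j hj; rewrite /ps_add mulCr hfn // hb1l ?mul0r ?addr0 //; nlia.
  have hl' : forall j, (j < N - d)%N -> ps_add f (ps_mul b1 (ps_const lam)) j = 0.
    move=> j hj; rewrite /ps_add mulCr.
    case: (ltnP j s) => hjs; first by rewrite hfl ?hb1l ?mul0r ?addr0.
    have -> : j = s by rewrite /s in hjs *; nlia.
    by rewrite /lam cancel_lead.
  have [a2 [b2 [h1 h2 h3' h4 h5]]] := IH _ hf' hn' hl'.
  exists a2, (ps_add b2 (ps_mul b1 (ps_const (- lam)))); split => //.
  + exact: J_comb.
  + apply: functional_extensionality => j.
    have := congr1 (fun h => h j) h3'; rewrite /ps_add !mulCr mulrN => E.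
    by rewrite addrA -E addrK.
  + move=> j hj; rewrite /ps_add mulCr h5 // hb1l ?mul0r ?addr0 //; nlia.
Qed.

Lemma L32 : P3 -> P2.
Proof.
move=> h3 i n; split; first exact: cap_easy.
move=> [[a [ha [han hal]]] [b [hb [hbn hbl]]]].
have [N hT] := T i.
set lam := - a n / b n.
have hg : ideal_add (I i) J (ps_add a (ps_mul b (ps_const lam))).
  exists a, (ps_mul b (ps_const lam)); split => //; split => //; exact: J_scale.
have hgn : forall j, (j <= n)%N -> ps_add a (ps_mul b (ps_const lam)) j = 0.
  move=> j hj; rewrite /ps_add mulCr.
  case: (ltnP j n) => hjn; first by rewrite hal ?hbl ?mul0r ?addr0.
  have -> : j = n by apply/eqP; rewrite eqn_leq hj hjn.
  by rewrite /lam cancel_lead.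
have hgl : forall j, (j < N - N)%N -> ps_add a (ps_mul b (ps_const lam)) j = 0.
  by move=> j; rewrite subnn.
have [a2 [b2 [h1 h2 h3' h4 h5]]] := @split32 h3 i n N hT N _ hg hgn hgl.
have E j : a j + b j * lam = a2 j + b2 j.
  by have := congr1 (fun h => h j) h3'; rewrite /ps_add mulCr.
exists (ps_add a (ps_mul a2 (ps_const (-1)))); split; first split.
- exact: I_comb.
- have -> : ps_add a (ps_mul a2 (ps_const (-1))) = ps_add b2 (ps_mul b (ps_const (- lam))).
    apply: functional_extensionality => j; rewrite /ps_add !mulCr mulrN1 mulrN.
    by rewrite -[a j](addrK (b j * lam)) E addrAC [a2 j + b2 j]addrC addrK.
  exact: J_comb.
- split; first by rewrite /ps_add mulCr h4 // mul0r addr0.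
  by move=> j hj; rewrite /ps_add mulCr hal // h4 ?mul0r ?addr0 // ltnW.
Qed.

Lemma he : vset R e. Proof. by case: hmult => _ []. Qed.
Lemma e_pos : (0 < e)%N. Proof. by case: hmult. Qed.

Lemma S_mul_e w q : vset R w -> vset R (w + q * e).
Proof.
move=> hw; elim: q => [|q IH]; first by rewrite mul0n addn0.
by rewrite mulSn addnCA; rewrite addnC; apply: S_add => //; exact: he.
Qed.

Lemma L34 : P3 -> P4.
Proof.
move=> h3 j hj w [hSw [hmod hmin]].
have hR0 : vset (I 0) w by [].
have [N [hN hNm]] := @max_exists (fun i => vset (I i) w) 0 w hR0 (@vsetI_bound^~ w).
exists N; split; first by split.
split; first by apply: add_easy; left.
move=> i /(h3 i w).1 [/hNm // | /vsetJ_inv [hle hS]].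
have hm : (w - e)%N = j %[mod e].
  by rewrite -hmod -{2}(subnK hle) modnDr.
exfalso; have h1 := hmin _ hS hm; have h2 := e_pos; nlia.
Qed.

Lemma L43 : P4 -> P3.
Proof.
move=> h4 i n; split; last exact: add_easy.
move=> hadd; case: (classic (vset J n)) => hJn; first by right.
left.
have hSn : vset R n.
  case: hadd => f [[a [b [ha [hb ->]]]] hv]; exists (ps_add a b); split => //.
  by apply: Radd; [exact: I_sub_R ha | exact: J_sub_R].
set j := (n %% e)%N.
have hj : (j < e)%N by apply: ltn_pmod; exact: e_pos.
have [w [[hSw hwmod] hwmin]] :=
  @min_exists (fun s => vset R s /\ s = j %[mod e]) n (conj hSn (esym (modn_mod _ _))).
have hap : is_apery (vset R) e j w by split => //; split => // s hs hm; apply: hwmin.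
have [N [[hN hNm] [hN' hN'm]]] := h4 j hj w hap.
have hwn : (w <= n)%N by apply: hwmin; split => //; rewrite modn_mod.
have Enw : n = w.
  apply/eqP; rewrite eq_sym eqn_leq hwn /=; rewrite leqNgt; apply/negP => hlt.
  apply: hJn.
  have hd : (e %| n - w)%N.
    by rewrite -eqn_mod_dvd // hwmod /j modn_mod.
  set q := ((n - w) %/ e)%N.
  have Eq : (q * e = n - w)%N by rewrite /q divnK.
  have hq : (0 < q)%N.
    rewrite lt0n; apply/eqP => hq0; move: Eq; rewrite hq0 mul0n => /esym /eqP.
    by rewrite subn_eq0 leqNgt hlt.
  have hS := S_mul_e q.-1 hSw.
  have := vsetJ_of hS.
  have -> // : (e + (w + q.-1 * e) = n)%N.
  rewrite -subn1 mulnBl mul1n.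
  have hqe : (e <= q * e)%N by apply: leq_pmull.
  nlia.
rewrite Enw in hadd *.
have hiN := hN'm i hadd.
case: hN => a [ha hv]; exists a; split => //; exact: I_mono hiN ha.
Qed.

End Ring.

Theorem proposition1p2 (k : fieldType) (R : series k -> Prop) (x : series k) (e : nat) :
  subring_with_k R ->
  conductor_nonzero R ->
  local_residue_k R ->
  is_multiplicity (vset R) e ->
  R x -> vval x e ->
  let m := nonunits R in
  [<-> ess_divisible R m x;
       forall i, forall n,
         vset (ideal_cap (ideal_pow R m i) (principal R x)) n <->
         vset (ideal_pow R m i) n /\ vset (principal R x) n;
       forall i, forall n,
         vset (ideal_add (ideal_pow R m i) (principal R x)) n <->
         vset (ideal_pow R m i) n \/ vset (principal R x) n;
       forall j, (j < e)%N -> forall w, is_apery (vset R) e j w ->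
         exists n, is_max (fun i => vset (ideal_pow R m i) w) n /\
                   is_max (fun i => vset (ideal_add (ideal_pow R m i) (principal R x)) w) n].
Proof.
move=> hR hcond hloc hmult hx hvx m; tfae.
- by apply: L12.
- by apply: L23.
- by apply: L34.
- move=> h4; apply: (L21 hR hloc hx); apply: (L32 hR hcond hmult hx hvx); exact: (L43 hR hmult hx hvx h4).
Qed.
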